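(* Let $y\in(0,1]$ and $A_0>0$. For every $z=u+iv\in\mathbb G$, $$\Big|\Big(z+\frac{y-1}{z}\Big)^2-4y\Big|\ge\frac{4y}{5}\max\{\gamma(z),v\}\qquad\text{and}\qquad nv\sqrt{\Big|\Big(z+\frac{y-1}{z}\Big)^2-4y\Big|}\ge \frac{4y}{5}A_0 .$$
   Context: Region $\mathbb G$ (depending on $n$, $y$, $A_0$): $a=1-\sqrt y$, $b=1+\sqrt y$, $V=4\sqrt y$, $v_0=A_0/n$, $\kappa>0$ defined by $\frac1\pi\int_{|u|\le\kappa}\frac{du}{1+u^2}=\frac34$, $\varepsilon=(2v_0\kappa)^{2/3}$; for $z=u+iv$, $\gamma(z)=\min\{||u|-a|,|b-|u||\}$; $\mathbb G=\{z=u+iv: a+\varepsilon\le|u|\le b-\varepsilon,\ v_0/\sqrt{\gamma(z)}\le v\le V\}$. *)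

(* Defs.v *)
From Stdlib Require Import Reals Lra.
Open Scope R_scope.

Definition C := (R * R)%type.
Definition Cadd (z w : C) : C := (fst z + fst w, snd z + snd w).
Definition Csub (z w : C) : C := (fst z - fst w, snd z - snd w).
Definition Cmul (z w : C) : C :=
  (fst z * fst w - snd z * snd w, fst z * snd w + snd z * fst w).
Definition Cinv (z : C) : C :=
  (fst z / (fst z ^ 2 + snd z ^ 2), - snd z / (fst z ^ 2 + snd z ^ 2)).
Definition Cdiv (z w : C) : C := Cmul z (Cinv w).
Definition RtoC (x : R) : C := (x, 0).
Definition Cmod (z : C) : R := sqrt (fst z ^ 2 + snd z ^ 2).

Definition a_ (y : R) : R := 1 - sqrt y.
Definition b_ (y : R) : R := 1 + sqrt y.
Definition V_ (y : R) : R := 4 * sqrt y.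

Definition gamma_ (y u : R) : R :=
  Rmin (Rabs (Rabs u - a_ y)) (Rabs (b_ y - Rabs u)).

Definition Dz (y : R) (z : C) : C :=
  let w := Cadd z (Cdiv (RtoC (y - 1)) z) in
  Csub (Cmul w w) (RtoC (4 * y)).

Definition kappa_spec (kappa : R) : Prop :=
  0 < kappa /\
  exists pr : Riemann_integrable (fun u => / (1 + u ^ 2)) (- kappa) kappa,
    / PI * RiemannInt pr = 3 / 4.

Definition inG (n : nat) (y A0 kappa u v : R) : Prop :=
  let v0 := A0 / INR n in
  let eps := Rpower (2 * v0 * kappa) (2 / 3) in
  a_ y + eps <= Rabs u <= b_ y - eps /\
  v0 / sqrt (gamma_ y u) <= v <= V_ y.

(* Main.v *)
Require Import Defs.
From Stdlib Require Import Reals Lra Psatz.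
Open Scope R_scope.

Lemma ident (s u v : R) : u^2+v^2 <> 0 ->
  let y := s*s in let a := 1 - s in let b := 1 + s in
  let D := Dz y (u,v) in
  (fst D ^2 + snd D ^2) * (u^2+v^2)^2 =
  ((u^2+a^2+v^2)^2 - 4*a^2*u^2) * ((u^2+b^2+v^2)^2 - 4*b^2*u^2).
Proof.
  intros H y a b D. unfold D, Dz, Cadd, Csub, Cmul, Cdiv, Cinv, RtoC, y, a, b; simpl.
  field. replace (u*u+v*v) with (u^2+v^2) by ring; exact H.
Qed.

Lemma key (y u v : R) : 0 < y -> y <= 1 -> 0 < v ->
  a_ y < Rabs u -> Rabs u < b_ y ->
  y * Rmax (gamma_ y u) v <= Cmod (Dz y (u, v)).
Proof.
  intros hy0 hy1 hv hau hub.
  set (s := sqrt y).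
  assert (hs : s * s = y) by (apply sqrt_sqrt; lra).
  assert (hs0 : 0 < s) by (apply sqrt_lt_R0; lra).
  assert (hs1 : s <= 1) by (unfold s; rewrite <- sqrt_1; apply sqrt_le_1_alt; lra).
  assert (ys : y <= s) by nra.
  unfold a_, b_ in *; fold s in hau, hub.
  assert (ht : u^2 = (Rabs u)^2) by (rewrite pow2_abs; reflexivity).
  set (t := Rabs u) in *.
  assert (ht0 : 0 <= t) by apply Rabs_pos.
  set (g := gamma_ y u).
  assert (hg : g = Rmin (t - (1 - s)) (1 + s - t)).
  { unfold g, gamma_, a_, b_; fold s t. rewrite !Rabs_right; lra. }
  assert (hg1 : g <= t - (1 - s)) by (rewrite hg; apply Rmin_l).
  assert (hg2 : g <= 1 + s - t) by (rewrite hg; apply Rmin_r).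
  assert (hg0 : 0 <= g) by (rewrite hg; apply Rmin_glb; lra).
  set (M := Rmax g v).
  assert (hMc : M = g \/ M = v).
  { unfold M; destruct (Rle_or_lt g v); [right; apply Rmax_right | left; apply Rmax_left]; lra. }
  assert (hMv : v <= M) by apply Rmax_r.
  assert (hMg : g <= M) by apply Rmax_l.
  assert (hM0 : 0 <= M) by lra.
  set (p := t - (1 - s)). set (q := 1 + s - t).
  assert (hpd : p = t - (1 - s)) by reflexivity. assert (hqd : q = 1 + s - t) by reflexivity.
  clearbody p q.
  set (Q := (p^2+v^2)*(q^2+v^2)).
  assert (hQ : y * M^2 <= Q).
  { unfold Q.
    assert (gp : g^2 <= p^2) by (apply pow_incr; split; lra).
    assert (gq : g^2 <= q^2) by (apply pow_incr; split; lra).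
    assert (v2 : 0 <= v^2) by (apply pow_le; lra).
    assert (p2 : 0 <= p^2) by (apply pow2_ge_0).
    assert (q2 : 0 <= q^2) by (apply pow2_ge_0).
    assert (hp2 : M^2 <= p^2+v^2) by (destruct hMc as [E|E]; rewrite E; lra).
    assert (hq2 : M^2 <= q^2+v^2) by (destruct hMc as [E|E]; rewrite E; lra).
    destruct (Rle_dec s p).
    - assert (y <= p^2+v^2) by nra. nra.
    - assert (s <= q) by lra.
      assert (y <= q^2+v^2) by nra. nra. }
  set (d := u^2+v^2).
  assert (hd : 0 < d) by (unfold d; nra).
  pose proof (ident s u v ltac:(fold d; lra)) as I. cbv zeta in I.
  rewrite hs in I. fold d in I.
  set (D := Dz y (u,v)) in *.
  set (N := fst D ^ 2 + snd D ^ 2) in *.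
  assert (F1 : (u ^ 2 + (1 - s) ^ 2 + v ^ 2) ^ 2 - 4 * (1 - s) ^ 2 * u ^ 2
             = (p^2+v^2) * ((t + (1-s))^2 + v^2)).
  { rewrite hpd, ht. ring. }
  assert (F2 : (u ^ 2 + (1 + s) ^ 2 + v ^ 2) ^ 2 - 4 * (1 + s) ^ 2 * u ^ 2
             = (q^2+v^2) * ((t + (1+s))^2 + v^2)).
  { rewrite hqd, ht. ring. }
  rewrite F1, F2 in I.
  assert (e1 : d <= (t + (1-s))^2 + v^2) by (unfold d; rewrite ht; nra).
  assert (e2 : d <= (t + (1+s))^2 + v^2) by (unfold d; rewrite ht; nra).
  assert (hP0 : 0 <= p^2+v^2) by nra.
  assert (hQ0 : 0 <= q^2+v^2) by nra.
  assert (hN : Q * (d*d) <= N * d^2).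
  { rewrite I. unfold Q.
    replace ((p ^ 2 + v ^ 2) * ((t + (1 - s)) ^ 2 + v ^ 2) *
      ((q ^ 2 + v ^ 2) * ((t + (1 + s)) ^ 2 + v ^ 2))) with
      (((p ^ 2 + v ^ 2) * (q ^ 2 + v ^ 2)) * (((t + (1 - s)) ^ 2 + v ^ 2) * ((t + (1 + s)) ^ 2 + v ^ 2))) by ring.
    apply Rmult_le_compat_l; [nra|]. apply Rmult_le_compat; lra. }
  assert (hNQ : Q <= N).
  { apply Rmult_le_reg_r with (d*d); [nra|]. replace (N*(d*d)) with (N*d^2) by ring. lra. }
  unfold Cmod. fold N.
  rewrite <- (sqrt_pow2 (y*M)) by nra.
  apply sqrt_le_1_alt.
  assert (y*y*M^2 <= y*M^2) by (apply Rmult_le_compat_r; nra).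
  simpl. nra.
Qed.

Theorem mainTheorem13 (n : nat) (y A0 kappa : R)
  (hn : (0 < n)%nat) (hy0 : 0 < y) (hy1 : y <= 1) (hA0 : 0 < A0)
  (hkappa : kappa_spec kappa) :
  forall u v : R, inG n y A0 kappa u v ->
    4 * y / 5 * Rmax (gamma_ y u) v <= Cmod (Dz y (u, v)) /\
    4 * y / 5 * A0 <= INR n * v * sqrt (Cmod (Dz y (u, v))).
Proof.
  intros u v [[h1 h2] [h3 h4]].
  set (eps := Rpower (2 * (A0 / INR n) * kappa) (2 / 3)) in *.
  assert (he : 0 < eps) by (unfold eps, Rpower; apply exp_pos).
  assert (hnr : 0 < INR n) by (apply lt_0_INR; exact hn).
  set (v0 := A0 / INR n) in *.
  assert (hv0 : 0 < v0) by (unfold v0; apply Rdiv_lt_0_compat; lra).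
  assert (hnv0 : INR n * v0 = A0) by (unfold v0; field; lra).
  set (g := gamma_ y u) in *.
  assert (hg : eps <= g).
  { unfold g, gamma_. rewrite (Rabs_right (Rabs u - a_ y)) by lra. rewrite (Rabs_right (b_ y - Rabs u)) by lra. apply Rmin_glb; lra. }
  assert (hsg : 0 < sqrt g) by (apply sqrt_lt_R0; lra).
  assert (hvg : v0 <= v * sqrt g).
  { apply Rmult_le_reg_r with (/ sqrt g).
    - apply Rinv_0_lt_compat; lra.
    - rewrite Rmult_assoc, Rinv_r by lra. lra. }
  assert (hv : 0 < v) by nra.
  pose proof (key y u v hy0 hy1 hv ltac:(lra) ltac:(lra)) as K. fold g in K.
  assert (hM : g <= Rmax g v) by apply Rmax_l.
  assert (hM2 : v <= Rmax g v) by apply Rmax_r.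
  split.
  - nra.
  - assert (hC : y * g <= Cmod (Dz y (u, v))) by nra.
    assert (hs : sqrt y * sqrt g <= sqrt (Cmod (Dz y (u, v)))).
    { rewrite <- sqrt_mult by lra. apply sqrt_le_1_alt. exact hC. }
    assert (hys : y <= sqrt y).
    { assert (y * y <= y) by nra. rewrite <- (sqrt_pow2 y) at 1 by lra.
      apply sqrt_le_1_alt. simpl. lra. }
    assert (hsy : 0 <= sqrt y) by apply sqrt_pos.
    assert (A0 <= INR n * (v * sqrt g)) by (rewrite <- hnv0; apply Rmult_le_compat_l; lra).
    apply Rle_trans with (INR n * v * (sqrt y * sqrt g)).
    + nra.
    + apply Rmult_le_compat_l; [nra | exact hs].
Qed.
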